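(* Let $b_n$ be the number of vertices of $\mathscr{BG}_+(n)$. Then $b_n=f_n+1$, where $f_1=0$ and for $n>1$ \[ f_n=\sum_{k=1}^{n-1}\binom{n}{k}\left(2^{2^k-1}-f_k-1\right). \]
   Context: For $N=\{1,\ldots,n\}$, a game is a map $v:2^N\to\mathbb{R}$ with $v(\varnothing)=0$. $\mathscr{BG}_+(n)$ is the polytope (in $\mathbb{R}^{2^N\setminus\{\varnothing,N\}}$) of games $v$ with $v(S)\geqslant 0$ for all $S$, $v(N)=1$, and nonempty core $C(v)=\{x\in\mathbb{R}^N:\sum_{i\in S}x_i\geqslant v(S)\ \forall S,\ \sum_{i\in N}x_i=v(N)\}$. *)

(* Defs.v *)
From HB Require Import structures.
From mathcomp Require Import all_boot all_order all_algebra.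
From mathcomp Require Import reals.
Set Implicit Arguments. Unset Strict Implicit. Unset Printing Implicit Defensive.
Import Order.TTheory GRing.Theory Num.Theory.
Local Open Scope ring_scope.

(* Players N = {1,...,n} are represented by 'I_n; coalitions by {set 'I_n}.
   A game is a function v : {set 'I_n} -> R with v set0 = 0. *)
Definition game (R : realType) (n : nat) := {ffun {set 'I_n} -> R}.

Definition in_core (R : realType) (n : nat) (v : game R n) (x : 'I_n -> R) : Prop :=
  (forall S : {set 'I_n}, v S <= \sum_(i in S) x i) /\
  \sum_(i in [set: 'I_n]) x i = v [set: 'I_n].

Definition core_nonempty (R : realType) (n : nat) (v : game R n) : Prop :=
  exists x : 'I_n -> R, in_core v x.

(* BG_+(n): games with v(empty)=0, v(S) >= 0, v(N) = 1, nonempty core.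
   (The coordinates at set0 and setT are fixed, so this is an affine copy of
   the polytope in R^(2^N \ {empty, N}).) *)
Definition BGplus (R : realType) (n : nat) (v : game R n) : Prop :=
  v set0 = 0 /\ v [set: 'I_n] = 1 /\
  (forall S : {set 'I_n}, 0 <= v S) /\ core_nonempty v.

Definition is_vertex (R : realType) (n : nat) (v : game R n) : Prop :=
  BGplus v /\
  forall (u w : game R n) (t : R), BGplus u -> BGplus w -> 0 < t < 1 ->
    (forall S, v S = t * u S + (1 - t) * w S) -> u = w.

(* Main.v *)
Require Import Defs.
From HB Require Import structures.
From mathcomp Require Import all_boot all_order all_algebra.
From mathcomp Require Import reals.
From mathcomp Require Import zify lra.
Import Order.TTheory GRing.Theory Num.Theory.
Set Implicit Arguments. Unset Strict Implicit. Unset Printing Implicit Defensive.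

Section Count.
Variable T : finType.
Implicit Types (A B C K M : {set T}) (G H : {set {set T}}).

Definition okfam M G : bool :=
  [forall B in G, (B != set0) && (B \proper M)] &&
  ((G == set0) || [exists i, [forall B in G, i \in B]]).
Definition cnt M := #|[set G | okfam M G]|.
Definition bc G := \bigcap_(B in G) B.

Lemma setDKU' A B : B \subset A -> (A :\: B) :|: B = A.
Proof.
move=> /subsetP sBA; apply/setP=> x; rewrite !inE.
by case xB: (x \in B); rewrite /= ?orbT ?orbF ?andbT ?(sBA _ xB).
Qed.

Lemma setUKD' C K : (forall x, x \in C -> x \notin K) -> (C :|: K) :\: K = C.
Proof.
move=> H; apply/setP=> x; rewrite !inE.
case xK: (x \in K) => /=; last by rewrite orbF.
by apply/esym/negP => xC; have := H _ xC; rewrite xK.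
Qed.

Lemma card_interval K M : K \subset M ->
  #|[set B : {set T} | K \subset B & B \subset M]| = 2 ^ #|M :\: K|.
Proof.
move=> sKM; rewrite -card_powerset.
have -> : [set B : {set T} | K \subset B & B \subset M] = [set C :|: K | C in powerset (M :\: K)].
  apply/setP=> B; rewrite inE; apply/andP/imsetP.
    case=> sKB sBM; exists (B :\: K); last by rewrite setDKU'.
    by rewrite powersetE setSD.
  case=> C; rewrite powersetE => sC ->; split; first exact: subsetUr.
  rewrite subUset sKM andbT; apply: subset_trans sC _; exact: subsetDl.
apply: card_in_imset => C1 C2; rewrite !powersetE => s1 s2 e.
have d : forall C, C \subset M :\: K -> forall x, x \in C -> x \notin K.
  by move=> C /subsetP sC x /sC; rewrite inE => /andP[].
by rewrite -(setUKD' (d _ s1)) e setUKD' //; apply: d.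
Qed.

Definition Sup K M := [set B : {set T} | K \subset B & B \proper M].

Lemma card_Sup K M : K \subset M -> #|Sup K M| = (2 ^ #|M :\: K|).-1.
Proof.
move=> sKM; rewrite -card_interval // [in RHS](cardsD1 M) !inE sKM subxx /=.
apply: eq_card => B; rewrite !inE properEneq.
by case: (K \subset B); case: (B != M).
Qed.


Lemma okfam0 M : okfam M set0.
Proof. by rewrite /okfam eqxx /= andbT; apply/forall_inP => B; rewrite inE. Qed.

Lemma cnt_rec M : cnt M = 1 + \sum_(K | (K != set0) && (K \proper M))
   #|[set G | okfam M G & (G != set0) && (bc G == K)]|.
Proof.
rewrite /cnt -sum1_card (bigD1 set0) /=; last by rewrite inE okfam0.
congr (_ + _).
rewrite (partition_big bc (fun K => (K != set0) && (K \proper M))).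
  apply: eq_bigr => K _; rewrite -sum1_card; apply: eq_bigl => G.
  by rewrite !inE andbA.
move=> G /andP[]; rewrite inE => /andP[/forall_inP hB hex] Gn0.
have [B BG] := set0Pn _ Gn0.
move: hex; rewrite (negbTE Gn0) /= => /existsP[i /forall_inP hi].
apply/andP; split.
  by apply/set0Pn; exists i; apply/bigcapP => C /hi.
apply: sub_proper_trans (bigcap_inf _ BG) _.
by case/andP: (hB B BG).
Qed.

Lemma cnt_split K M : K != set0 -> K \proper M ->
  #|[set G | okfam M G & (G != set0) && (bc G == K)]| + cnt (M :\: K)
  = 2 ^ (2 ^ #|M :\: K|).-1.
Proof.
move=> Kn0 KM; have sKM := proper_sub KM.
pose X := [set G : {set {set T}} | (G != set0) && (bc G == K)].
rewrite -(card_Sup sKM) -card_powerset -(cardsID X (powerset (Sup K M))).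
have [k kK] := set0Pn _ Kn0.
congr (_ + _).
  apply: eq_card => G; rewrite !inE.
  case: (boolP (G != set0)) => Gn0 /=; last by rewrite !andbF.
  case: (eqVneq (bc G) K) => ebc /=; last by rewrite !andbF.
  rewrite !andbT; apply/idP/idP.
    case/andP=> /forall_inP hB _; apply/subsetP => B BG; rewrite inE.
    rewrite -ebc bigcap_inf //=; by case/andP: (hB B BG).
  move/subsetP => sG; apply/andP; split.
    apply/forall_inP => B BG; move: (sG B BG); rewrite inE => /andP[sKB ->].
    rewrite andbT; apply/set0Pn; exists k; exact: (subsetP sKB).
  rewrite (negbTE Gn0) /=; apply/existsP; exists k; apply/forall_inP => B BG.
  by move: (sG B BG); rewrite inE => /andP[/subsetP -> ].
pose phi := fun G : {set {set T}} => (fun B => B :\: K) @: G.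
pose psi := fun H : {set {set T}} => (fun C => C :|: K) @: H.
have phiK : {in powerset (Sup K M), cancel phi psi}.
  move=> G; rewrite powersetE => /subsetP sG.
  rewrite /phi /psi -imset_comp -[RHS]imset_id; apply: eq_in_imset => B BG /=.
  by apply: setDKU'; move: (sG B BG); rewrite inE => /andP[].
have dj : forall C, C \subset M :\: K -> forall x, x \in C -> x \notin K.
  by move=> C /subsetP sC x /sC; rewrite inE => /andP[].
rewrite /cnt -[in RHS](@card_in_imset _ _ phi); last first.
  by move=> G1 G2; rewrite !in_setD => /andP[_ h1] /andP[_ h2]; exact: (can_in_inj phiK h1 h2).
apply: eq_card => H; rewrite inE; apply/idP/imsetP; last first.
  case=> G; rewrite !inE => /andP[nX /subsetP sG] ->.
  case: (eqVneq G set0) => [-> | Gn0]; first by rewrite /phi imset0 okfam0.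
  move: nX; rewrite Gn0 /= => nbc.
  have sKb : K \subset bc G.
    apply/bigcapsP => B BG; by move: (sG B BG); rewrite inE => /andP[].
  have : K \proper bc G by rewrite properEneq eq_sym nbc.
  case/properP => _ [i ibc iK].
  have hi : forall B, B \in G -> i \in B :\: K.
    by move=> B BG; rewrite inE iK /=; move/bigcapP: ibc; apply.
  apply/andP; split; last first.
    apply/orP; right; apply/existsP; exists i; apply/forall_inP => C.
    by case/imsetP => B BG ->; apply: hi.
  apply/forall_inP => C /imsetP[B BG ->].
  move: (sG B BG); rewrite inE => /andP[sKB]; rewrite properEneq => /andP[BM sBM].
  apply/andP; split; first by apply/set0Pn; exists i; apply: hi.
  rewrite properEneq setSD // andbT; apply: contra BM => /eqP e.
  by rewrite -(setDKU' sKB) e setDKU'.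
move=> /andP[/forall_inP hH hex].
exists (psi H); last first.
  rewrite /phi /psi -imset_comp -[LHS]imset_id; apply: eq_in_imset => C CH /=.
  rewrite setUKD' //; apply: dj; case/andP: (hH C CH) => _ /proper_sub //.
have sS : psi H \subset Sup K M.
  apply/subsetP => B /imsetP[C CH ->]; rewrite inE subsetUr /=.
  case/andP: (hH C CH) => _ CMK; have sC := proper_sub CMK.
  rewrite properEneq subUset sKM andbT (subset_trans sC (subsetDl _ _)) andbT.
  apply/eqP => e; move: CMK; rewrite properEneq => /andP[/eqP CMK' _]; apply: CMK'.
  by rewrite -e setUKD' //; apply: dj.
rewrite !inE sS andbT.
case: (eqVneq H set0) => [-> | Hn0]; first by rewrite /psi imset0 eqxx.
move: hex; rewrite (negbTE Hn0) /= => /existsP[i /forall_inP hi].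
have [C0 C0H] := set0Pn _ Hn0.
have iK : i \notin K.
  apply: (dj C0); last exact: hi.
  by case/andP: (hH C0 C0H) => _ /proper_sub.
rewrite negb_and negbK; apply/orP; right.
apply: contra iK => /eqP <-; apply/bigcapP => B /imsetP[C CH ->].
by rewrite inE hi.
Qed.

Local Open Scope ring_scope.
Lemma sum_card_K (g : nat -> int) (M : {set T}) :
  \sum_(K : {set T} | (K != set0) && (K \proper M)) g #|K|
  = \sum_(1 <= k < #|M|) ('C(#|M|, k))%:Z * g k.
Proof.
symmetry.
transitivity (\sum_(1 <= k < #|M|) \sum_(K : {set T} | (K != set0) && (K \proper M))
                 (if #|K| == k then g k else 0)).
  apply: eq_big_nat => k /andP[k1 km].
  rewrite -big_mkcondr /=.
  rewrite (eq_bigl (fun K => K \in [set K : {set T} | K \subset M & #|K| == k])).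
    by rewrite sumr_const cards_draws -mulr_natl natz.
  move=> K; rewrite inE properEcard -cards_eq0.
  case: (eqVneq #|K| k) => [->|]; rewrite ?andbF //.
  by rewrite km !andbT -lt0n k1.
rewrite exchange_big /=; apply: eq_bigr => K /andP[Kn0 KM].
rewrite (bigD1_seq #|K|) /= ?iota_uniq ?mem_index_iota; last first.
  by []. by rewrite card_gt0 Kn0 proper_card.
rewrite eqxx big1 ?addr0 // => k; rewrite eq_sym => /negbTE ->; done.
Qed.

Lemma sum_by_card (h : nat -> int) (M : {set T}) :
  \sum_(K : {set T} | (K != set0) && (K \proper M)) h #|M :\: K|
  = \sum_(1 <= k < #|M|) ('C(#|M|, k))%:Z * h k.
Proof.
rewrite (eq_bigr (fun K : {set T} => h (#|M| - #|K|)%N)); last first.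
  by move=> K /andP[_ /proper_sub sKM]; rewrite cardsD (setIidPr sKM).
rewrite (sum_card_K (fun k => h (#|M| - k)%N)) big_nat_rev /=.
apply: eq_big_nat => k /andP[k1 km].
have -> : (1 + #|M| - k.+1 = #|M| - k)%N by rewrite add1n subSS.
by rewrite bin_sub ?subKn // ltnW.
Qed.

Lemma cnt_f (f : nat -> int) (f1 : f 1%N = 0%R)
  (frec : forall n : nat, (1 < n)%N ->
     f n = (\sum_(1 <= k < n) ('C(n, k))%:Z * (2%:Z ^+ (2 ^ k - 1) - f k - 1))%R)
  (M : {set T}) : (0 < #|M|)%N -> (cnt M)%:Z = (f #|M| + 1)%R.
Proof.
have [m] := ubnP #|M|; elim: m M => // m IH M hM M0.
rewrite cnt_rec PoszD GRing.addrC; congr (_ + _)%R.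
rewrite -natz natr_sum.
rewrite (eq_bigr (fun K : {set T} =>
   (2%:Z ^+ (2 ^ #|M :\: K| - 1) - f #|M :\: K| - 1)%R)).
  rewrite (sum_by_card (fun k => 2%:Z ^+ (2 ^ k - 1) - f k - 1)); case: (ltnP 1 #|M|) => h; first by rewrite frec.
  have e1 : #|M| = 1%N by lia.
  by rewrite e1 big_geq // f1.
move=> K /andP[Kn0 KM].
have sKM := proper_sub KM.
have cK : #|M :\: K| = (#|M| - #|K|)%N by rewrite cardsD (setIidPr sKM).
have k0 : (0 < #|K|)%N by rewrite card_gt0.
have kM := proper_card KM.
have := IH (M :\: K) ltac:(lia) ltac:(lia).
have := cnt_split Kn0 KM.
move/(congr1 (fun x : nat => x%:Z)); rewrite PoszD => e IHK.
rewrite natz.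
have -> : (2%:Z ^+ (2 ^ #|M :\: K| - 1) = (2 ^ (2 ^ #|M :\: K|).-1)%:Z)%R.
  by rewrite -[RHS]natz natrX natz subn1.
rewrite -e IHK; lia.
Qed.

End Count.

Local Open Scope ring_scope.
Section Games.
Variables (R : realType) (n : nat) (hn : (0 < n)%N).

Definition gF (F : {set {set 'I_n}}) : game R n :=
  [ffun S => if (S \in F) || (S == setT) then 1 else 0].

Lemma setT_neq0 : (setT : {set 'I_n}) != set0.
Proof. by apply/set0Pn; exists (Ordinal hn); rewrite inE. Qed.

Lemma okfam_common F : okfam [set: 'I_n] F -> exists i : 'I_n, forall B, B \in F -> i \in B.
Proof.
case/andP => _ /orP[/eqP -> | /existsP[i /forall_inP h]].
  by exists (Ordinal hn) => B; rewrite inE.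
by exists i.
Qed.

Lemma okfam_mem F B : okfam [set: 'I_n] F -> B \in F -> (B != set0) /\ (B != setT).
Proof.
by case/andP => /forall_inP h _ /h /andP[-> ]; rewrite properT.
Qed.

Lemma sum_ind (i : 'I_n) (c : R) (A : {set 'I_n}) :
  \sum_(j in A) (if j == i then c else 0) = if i \in A then c else 0.
Proof.
case: (boolP (i \in A)) => iA.
  rewrite (bigD1 i) //= eqxx big1 ?addr0 // => j /andP[_ /negbTE ->] //.
by rewrite big1 // => j jA; case: eqP => // eji; move: iA; rewrite -eji jA.
Qed.

Lemma sum_sub (x : 'I_n -> R) (S : {set 'I_n}) : (forall j, 0 <= x j) ->
  \sum_(j in S) x j <= \sum_(j in [set: 'I_n]) x j.
Proof.
move=> h; rewrite big_mkcond [X in _ <= X]big_mkcond /=; apply: ler_sum => j _.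
by rewrite in_setT; case: ifP.
Qed.

Lemma core_nonneg (v : game R n) x : in_core v x -> (forall S, 0 <= v S) ->
  forall j, 0 <= x j.
Proof.
case=> h1 _ h0 j; apply: le_trans (h0 [set j]) _.
by have := h1 [set j]; rewrite big_set1.
Qed.

Lemma BG_le1 (v : game R n) : BGplus v -> forall S, v S <= 1.
Proof.
case=> _ [vT [v0 [x xc]]] S.
have xn := core_nonneg xc v0.
apply: le_trans (xc.1 S) _; rewrite -vT -xc.2; exact: sum_sub.
Qed.

Lemma gF_vertex F : okfam [set: 'I_n] F -> is_vertex (gF F).
Proof.
move=> okF; have [i hi] := okfam_common okF.
split.
  split; first by rewrite ffunE; case: ifP => //; case/orP => [/(okfam_mem okF)[/eqP []]|] //; rewrite eq_sym (negbTE setT_neq0).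
  split; first by rewrite ffunE eqxx orbT.
  split; first by move=> S; rewrite ffunE; case: ifP.
  exists (fun j => if j == i then 1 else 0); split.
    move=> S; rewrite ffunE sum_ind; case: ifP => [/orP[/hi -> | /eqP ->] | _] //.
      by rewrite in_setT.
    by case: ifP.
  by rewrite sum_ind in_setT ffunE eqxx orbT.
move=> u w t Bu Bw /andP[t0 t1] h; apply/ffunP => S.
have := h S; have u1 := BG_le1 Bu S; have w1 := BG_le1 Bw S.
have u0 := Bu.2.2.1 S; have w0 := Bw.2.2.1 S.
rewrite ffunE; case: ifP => _ e; nra.
Qed.

Lemma gF_inj : {in [pred F | okfam [set: 'I_n] F] &, injective gF}.
Proof.
move=> F1 F2; rewrite !inE => ok1 ok2 e; apply/setP => B.
have := congr1 (fun g : game R n => g B) e; rewrite !ffunE.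
case: (eqVneq B setT) => [-> | BT].
  have n1 : setT \notin F1 by apply/negP => /(okfam_mem ok1)[_ /eqP].
  have n2 : setT \notin F2 by apply/negP => /(okfam_mem ok2)[_ /eqP].
  by rewrite (negbTE n1) (negbTE n2).
rewrite !orbF; case: (B \in F1); case: (B \in F2) => //= /eqP;
  by rewrite ?oner_eq0 // eq_sym oner_eq0.
Qed.


Lemma vertex_gF (v : game R n) : is_vertex v ->
  exists2 F, okfam [set: 'I_n] F & v = gF F.
Proof.
case=> Bv ext; have Bv' := Bv.
case: Bv' => v0 [vT [vnn [x [xc1 xc2]]]].
have xn := core_nonneg (conj xc1 xc2) vnn.
have xs1 : \sum_(j in [set: 'I_n]) x j = 1 by rewrite xc2.
have step1 : forall S, v S != 0 -> v S = \sum_(j in S) x j.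
  move=> S vS0; apply/eqP; rewrite eq_le xc1 /= leNgt; apply/negP => lt.
  have vpos : 0 < v S by rewrite lt_def vS0 vnn.
  set xS := \sum_(j in S) x j in lt.
  have [d [d0 [d1 d2]]] : exists d, 0 < d /\ d <= v S /\ d <= xS - v S.
    by case: (lerP (v S) (xS - v S)) => h; [exists (v S) | exists (xS - v S)];
       split; lra.
  have S0 : (set0 == S) = false by apply/negbTE; apply: contra vS0 => /eqP <-; rewrite v0.
  have ST : ([set: 'I_n] == S) = false.
    apply/negbTE; apply/eqP => eST; move: lt; rewrite /xS -eST xs1 vT; lra.
  pose u : game R n := [ffun A => if A == S then v S + d else v A].
  pose w : game R n := [ffun A => if A == S then v S - d else v A].
  have Bu : BGplus u.
    split; first by rewrite ffunE S0.
    split; first by rewrite ffunE ST.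
    split; first by move=> A; rewrite ffunE; case: ifP => _ //; lra.
    exists x; split; last by rewrite ffunE ST.
    by move=> A; rewrite ffunE; case: eqP => [->|_]; [rewrite -/xS; lra | apply: xc1].
  have Bw : BGplus w.
    split; first by rewrite ffunE S0.
    split; first by rewrite ffunE ST.
    split; first by move=> A; rewrite ffunE; case: ifP => _ //; lra.
    exists x; split; last by rewrite ffunE ST.
    by move=> A; rewrite ffunE; case: eqP => [->|_]; [rewrite -/xS; lra | apply: xc1].
  have t01 : 0 < (1/2 : R) < 1 by apply/andP; split; lra.
  have : u = w.
    by apply: (ext u w (1/2) Bu Bw t01) => A; rewrite !ffunE; case: eqP => [->|_]; lra.
  by move/ffunP/(_ S); rewrite !ffunE eqxx; lra.
have [i xi] : exists i, 0 < x i.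
  case: (boolP [exists i, 0 < x i]) => [/existsP //|/existsPn h].
  have : \sum_(j in [set: 'I_n]) x j <= \sum_(j in [set: 'I_n]) (0 : R).
    by apply: ler_sum => j _; rewrite leNgt; apply: h.
  by rewrite big1_eq xs1; lra.
have xi1 : x i <= 1.
  by rewrite -xs1; apply: le_trans (sum_sub [set i] xn); rewrite big_set1.
pose t := x i / 2.
have t0 : 0 < t by rewrite /t; lra.
have t1 : t < 1 by rewrite /t; lra.
have t1n : 1 - t != 0 by apply/eqP; lra.
pose y := fun j => (x j - (if j == i then t else 0)) / (1 - t).
have sy : forall A : {set 'I_n}, \sum_(j in A) y j
    = (\sum_(j in A) x j - (if i \in A then t else 0)) / (1 - t).
  by move=> A; rewrite -sum_ind -sumrB mulr_suml.
have yn : forall j, 0 <= y j.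
  move=> j; rewrite /y; apply: divr_ge0; last by lra.
  case: eqP => [->|_]; rewrite /t; have := xn j; lra.
have sy1 : \sum_(j in [set: 'I_n]) y j = 1.
  by rewrite sy xs1 in_setT divff.
have T0 : ([set: 'I_n] == set0) = false by apply/negbTE; apply: setT_neq0.
have T0' : (set0 == [set: 'I_n]) = false by rewrite eq_sym.
pose u : game R n := [ffun A => if A == setT then 1 else
                        if v A != 0 then (if i \in A then 1 else 0) else 0].
pose w : game R n := [ffun A => if A == setT then 1 else
                        if v A != 0 then \sum_(j in A) y j else 0].
have Bu : BGplus u.
  split; first by rewrite ffunE T0' v0 eqxx.
  split; first by rewrite ffunE eqxx.
  split; first by move=> A; rewrite ffunE; do 3 case: ifP => _ //.
  exists (fun j => if j == i then 1 else 0); split.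
    move=> A; rewrite ffunE sum_ind; case: eqP => [->|_]; first by rewrite in_setT.
    by do 2 case: ifP => _ //.
  by rewrite sum_ind in_setT ffunE eqxx.
have Bw : BGplus w.
  split; first by rewrite ffunE T0' v0 eqxx.
  split; first by rewrite ffunE eqxx.
  split; first by move=> A; rewrite ffunE; do 2 case: ifP => _ //; apply: sumr_ge0.
  exists y; split; last by rewrite sy1 ffunE eqxx.
  move=> A; rewrite ffunE; case: eqP => [->|_]; first by rewrite sy1.
  by case: ifP => _ //; apply: sumr_ge0.
have dec : forall A, v A = t * u A + (1 - t) * w A.
  move=> A; rewrite !ffunE; case: eqP => [->|_]; first by rewrite vT; lra.
  case: (boolP (v A != 0)) => vA; last by move/negPn/eqP: vA => ->; lra.
  rewrite sy [(1 - t) * _]mulrC divfK // (step1 A vA).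
  by case: (i \in A); lra.
have euw : u = w by apply: (ext u w t Bu Bw); [apply/andP; split | ].
have vu : forall A, v A = u A.
  by move=> A; rewrite dec -euw; lra.
exists [set A | (A != setT) && (v A != 0)].
  apply/andP; split.
    apply/forall_inP => B; rewrite inE => /andP[BT vB]; rewrite properT BT andbT.
    by apply: contra vB => /eqP ->; rewrite v0.
  apply/orP; right; apply/existsP; exists i; apply/forall_inP => B.
  rewrite inE => /andP[/negbTE BT vB]; move: (vB); rewrite vu ffunE BT vB.
  by case: ifP => //; rewrite eqxx.
apply/ffunP => A; rewrite !ffunE inE.
case: (eqVneq A setT) => [->|AT]; first by rewrite vT orbT.
rewrite /= orbF; case: (boolP (v A != 0)) => vA /=; last by apply/eqP; rewrite -(negbK (_ == _)).
move: (vA); rewrite vu ffunE (negbTE AT) vA.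
by case: ifP => //; rewrite eqxx.
Qed.

End Games.

Local Open Scope ring_scope.

Theorem theorem10 (R : realType) (f : nat -> int)
  (f1 : f 1%N = 0)
  (frec : forall n : nat, (1 < n)%N ->
     f n = \sum_(1 <= k < n) ('C(n, k))%:Z * (2%:Z ^+ (2 ^ k - 1) - f k - 1))
  (n : nat) (hn : (1 <= n)%N) :
  exists s : seq (game R n),
    [/\ uniq s, (forall v : game R n, v \in s <-> is_vertex v)
      & (size s)%:Z = f n + 1].
Proof.
pose O := [set F : {set {set 'I_n}} | okfam [set: 'I_n] F].
exists [seq @gF R n F | F <- enum O]; split.
- rewrite map_inj_in_uniq ?enum_uniq // => F1 F2; rewrite !mem_enum !inE => h1 h2.
  by apply: (gF_inj (R := R)); rewrite inE.
- move=> v; split.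
    by case/mapP => F; rewrite mem_enum inE => okF ->; exact: (gF_vertex R hn okF).
  by move/(vertex_gF hn) => [F okF ->]; apply/mapP; exists F => //; rewrite mem_enum inE.
- rewrite size_map -cardE.
  have := @cnt_f _ f f1 frec [set: 'I_n].
  by rewrite /cnt cardsT card_ord; apply.
Qed.
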